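(* Let $\eta>0$, let $X^\eta$ be the unique minimizer of $g_\eta$ over $\mathbb{R}^{n\times n}_+$, let $X_f$ be any minimizer of $f$ over $\mathbb{R}^{n\times n}_+$, and let $(\mathbf u^*,\mathbf v^* )$ be the $(\mathbf u,\mathbf v)$-part of an optimal solution of the dual problem $\max_{(\mathbf u,\mathbf v,\mathbf t)\in\mathcal X}\{-\frac{1}{4\eta}\sum_{ij}t_{ij}^2-\tau\langle e^{-\mathbf u/\tau},\mathbf a\rangle-\tau\langle e^{-\mathbf v/\tau},\mathbf b\rangle+\mathbf a^\top\mathbf 1_n+\mathbf b^\top\mathbf 1_n\}$ with $\mathcal X=\{(\mathbf u,\mathbf v,\mathbf t):t_{ij}\ge0,\ t_{ij}\ge u_i+v_j-C_{ij}\}$. Let $D=\|C\|_\infty+\eta(\alpha+\beta)+\tau\log\big(\frac{\alpha+\beta}{2}\big)-\tau\min\{\log a_{min},\log b_{min}\}$. Then: (i) $\|X^\eta\|_1\le\frac{\alpha+\beta}{2}$ and $\|X_f\|_1\le\frac{\alpha+\beta}{2}$; (ii) $u^*_i\ge\tau\log\big(\frac{2a_i}{\alpha+\beta}\big)$ and $v^*_j\ge\tau\log\big(\frac{2b_j}{\alpha+\beta}\big)$ for all $i,j\in[n]$; (iii) $\|\mathbf u^*\|_\infty\le D$ and $\|\mathbf v^*\|_\infty\le D$; (iv) $\min_{i,j}\big\{\sum_{k}X^\eta_{ik},\sum_k X^\eta_{kj}\big\}\ge\min\{a_{min},b_{min}\}e^{-D/\tau}$.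
   Context: Let $n\ge1$, $C\in\mathbb{R}^{n\times n}$ with nonnegative entries and $\|C\|_\infty=\max_{i,j}|C_{ij}|$; $\mathbf a,\mathbf b\in\mathbb{R}^n$ with strictly positive entries, $\alpha=\sum_i a_i$, $\beta=\sum_i b_i$, $a_{min}=\min_i a_i$, $b_{min}=\min_i b_i$; $\tau>0$. For $\mathbf x\in\mathbb{R}^n_+$ and $\mathbf y$ with positive entries, $\mathbf{KL}(\mathbf x\|\mathbf y)=\sum_i x_i\log(x_i/y_i)-x_i+y_i$ (with $0\log0=0$). $\|X\|_1=\sum_{ij}|X_{ij}|$, $\|X\|_2$ is the Frobenius norm, $\mathbf 1_n$ the all-ones vector, $e^{-\mathbf u/\tau}$ the entrywise exponential. $f(X)=\langle C,X\rangle+\tau\mathbf{KL}(X\mathbf 1_n\|\mathbf a)+\tau\mathbf{KL}(X^\top\mathbf 1_n\|\mathbf b)$ for $X\in\mathbb{R}^{n\times n}_+$, and $g_\eta(X)=f(X)+\eta\|X\|_2^2$. *)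

(* Defs.v *)
From mathcomp Require Import all_boot all_order all_algebra.
From mathcomp Require Import all_classical all_reals all_analysis.
Set Implicit Arguments. Unset Strict Implicit. Unset Printing Implicit Defensive.
Import Order.TTheory GRing.Theory Num.Theory.
Local Open Scope ring_scope.

Section Defs.
Variables (R : realType) (n : nat).

Definition KL (x y : 'I_n -> R) : R :=
  \sum_i ((if x i == 0 then 0 else x i * ln (x i / y i)) - x i + y i).

Definition rowsum (X : 'M[R]_n) : 'I_n -> R := fun i => \sum_k X i k.
Definition colsum (X : 'M[R]_n) : 'I_n -> R := fun j => \sum_k X k j.

Definition nonneg_mx (X : 'M[R]_n) : Prop := forall i j, 0 <= X i j.

Definition fobj (C : 'M[R]_n) (a b : 'I_n -> R) (tau : R) (X : 'M[R]_n) : R :=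
  \sum_i \sum_j C i j * X i j + tau * KL (rowsum X) a + tau * KL (colsum X) b.

Definition gobj (C : 'M[R]_n) (a b : 'I_n -> R) (tau eta : R) (X : 'M[R]_n) : R :=
  fobj C a b tau X + eta * \sum_i \sum_j X i j ^+ 2.

Definition is_minimizer (F : 'M[R]_n -> R) (X : 'M[R]_n) : Prop :=
  nonneg_mx X /\ forall Y, nonneg_mx Y -> F X <= F Y.

Definition norm1_mx (X : 'M[R]_n) : R := \sum_i \sum_j `|X i j|.
Definition normInf_mx (X : 'M[R]_n) : R := \big[Num.max/0]_i \big[Num.max/0]_j `|X i j|.
Definition normInf_v (x : 'I_n -> R) : R := \big[Num.max/0]_i `|x i|.

(* minimum entry of a vector; the default i0 only serves as seed (n >= 1) *)
Definition vmin (i0 : 'I_n) (x : 'I_n -> R) : R := \big[Num.min/x i0]_i x i.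

Definition dual_feasible (C : 'M[R]_n) (u v : 'I_n -> R) (t : 'M[R]_n) : Prop :=
  forall i j, 0 <= t i j /\ u i + v j - C i j <= t i j.

Definition dual_obj (a b : 'I_n -> R) (tau eta : R) (u v : 'I_n -> R) (t : 'M[R]_n) : R :=
  - (4 * eta)^-1 * (\sum_i \sum_j t i j ^+ 2)
  - tau * (\sum_i expR (- u i / tau) * a i)
  - tau * (\sum_j expR (- v j / tau) * b j)
  + \sum_i a i + \sum_j b j.

Definition dual_optimal (C : 'M[R]_n) (a b : 'I_n -> R) (tau eta : R)
  (u v : 'I_n -> R) (t : 'M[R]_n) : Prop :=
  dual_feasible C u v t /\
  forall u' v' t', dual_feasible C u' v' t' ->
    dual_obj a b tau eta u' v' t' <= dual_obj a b tau eta u v t.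

End Defs.

(* Main.v *)
Require Import Defs.
From mathcomp Require Import all_boot all_order all_algebra.
From mathcomp Require Import all_classical all_reals all_analysis.
From mathcomp Require Import ring lra.
Import Order.TTheory GRing.Theory Num.Theory.
Local Open Scope ring_scope.

Set Implicit Arguments. Unset Strict Implicit.
Section S.
Variable R : realType.

Definition hf (x y : R) : R := if x == 0 then 0 else x * ln (x / y).

Lemma ln_le_sub1 (x : R) : 0 < x -> ln x <= x - 1.
Proof.
move=> hx; have := @le_ln1Dx R (x - 1).
rewrite addrCA subrr addr0; apply; lra.
Qed.

Lemma ln_le_of (y z : R) : 0 < y -> y <= expR z -> ln y <= z.
Proof.
move=> hy hyz; rewrite -(expRK z) ler_ln ?posrE ?expR_gt0 //.
Qed.

Lemma exp_le_of (y z : R) : 0 < y -> z <= ln y -> expR z <= y.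
Proof.
move=> hy hz; rewrite -(lnK hy) ler_expR //.
Qed.

Lemma small_pos (A K d0 : R) : 0 < d0 -> 0 <= K ->
  (forall d, 0 < d -> d <= d0 -> A <= K * d) -> A <= 0.
Proof.
move=> hd0 hK H; rewrite leNgt; apply/negP => hA.
pose d := Num.min d0 (A / (K + 1)).
have hd : 0 < d by rewrite lt_min hd0 divr_gt0 //; lra.
have h1 : d <= d0 by rewrite ge_min lexx.
have h2 : d <= A / (K + 1) by rewrite ge_min lexx orbT.
have := H d hd h1.
have : (K + 1) * d <= A by rewrite mulrC -ler_pdivlMr; [exact h2| lra].
nra.
Qed.

Lemma final_s (s al be : R) : 0 < s -> 0 < al -> 0 < be ->
  ln (s / al) + ln (s / be) <= 0 -> s <= (al + be) / 2.
Proof.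
move=> hs ha hb H.
rewrite -lnM ?posrE ?divr_gt0 // in H.
have H2 : s / al * (s / be) <= 1.
  have hp : 0 < s / al * (s / be) by rewrite mulr_gt0 // divr_gt0.
  by move: H; rewrite -ln1 ler_ln // posrE.
have H3 : s * s <= al * be.
  by move: H2; rewrite mulf_div ler_pdivrMr ?mulr_gt0 // mul1r.
rewrite leNgt; apply/negP => h.
have h0 : 0 <= (al + be) / 2 by lra.
have h4 : (al + be) / 2 * ((al + be) / 2) < s * s.
  by apply: (@lt_le_trans _ _ ((al + be) / 2 * s)); [rewrite ltr_pM2l //; lra | rewrite ler_pM2r //; lra].
have h5 : 0 <= (al - be) ^+ 2 by apply: sqr_ge0.
nra.
Qed.

Lemma expN_bound (y : R) : -(1/2) <= y -> expR (- y) <= 1 - y + 2 * y ^+ 2.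
Proof.
move=> hy; rewrite expRN.
have h1 := @expR_ge1Dx R y.
rewrite -[_^-1]mul1r ler_pdivrMr ?expR_gt0 //.
have hr : 0 <= 1 - y + 2 * y ^+ 2 by nra.
apply: le_trans (ler_wpM2l hr h1); nra.
Qed.

Lemma pmax_sq (x d : R) :
  Num.max 0 (x + d) ^+ 2 <= Num.max 0 x ^+ 2 + 2 * d * Num.max 0 x + d ^+ 2.
Proof.
case: (leP 0 x) => hx; case: (leP 0 (x + d)) => hxd; rewrite ?max_r ?max_l //; try nra.
all: try (rewrite max_r //; nra).
Qed.

Lemma hconv (r t y : R) : 0 <= r -> 0 < t -> 0 < y ->
  hf (r + t) y - hf r y <= t * (ln ((r + t) / y) + 1).
Proof.
move=> hr ht hy; rewrite /hf.
have -> : (r + t == 0) = false by apply/negbTE; rewrite gt_eqF //; lra.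
case: eqP => [->|/eqP r0].
  by rewrite add0r subr0; nra.
have rp : 0 < r by rewrite lt_neqAle eq_sym r0.
have hrt : 0 < r + t by lra.
rewrite !ln_div ?posrE //.
have H := ln_le_sub1 (divr_gt0 hrt rp).
rewrite ln_div ?posrE // in H.
have : r * (ln (r + t) - ln r) <= r * ((r + t) / r - 1) by rewrite ler_pM2l.
have -> : r * ((r + t) / r - 1) = t by field; rewrite gt_eqF.
nra.
Qed.

Lemma hscale (c x y : R) : 0 < c -> 0 <= x -> 0 < y ->
  hf (c * x) y = c * hf x y + c * ln c * x.
Proof.
move=> hc hx hy; rewrite /hf mulf_eq0 (gt_eqF hc) /=.
case: eqP => [->|/eqP x0]; first by rewrite !mulr0 addr0.
have xp : 0 < x by rewrite lt_neqAle eq_sym x0.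
have e : c * x / y = c * (x / y) by rewrite mulrA.
rewrite e lnM ?posrE ?divr_gt0 //; ring.
Qed.

Lemma logsum_term (x y s al : R) : 0 <= x -> 0 < y -> 0 < s -> 0 < al ->
  x * ln (s / al) - y * s / al + x <= hf x y.
Proof.
move=> hx hy hs ha; rewrite /hf.
case: eqP => [->|/eqP x0].
  rewrite mul0r add0r addr0 oppr_le0; apply: divr_ge0; nra.
have xp : 0 < x by rewrite lt_neqAle eq_sym x0.
have q : 0 < y * s / (x * al) by rewrite !divr_gt0 ?mulr_gt0.
have := ln_le_sub1 q.
have -> : y * s / (x * al) = (s / al) / (x / y) by field; rewrite !gt_eqF.
rewrite ln_div ?posrE ?divr_gt0 // => H.
have H2 : x * (ln (s / al) - ln (x / y)) <= x * (s / al / (x / y) - 1) by rewrite ler_pM2l.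
have -> : y * s / al = x * (s / al / (x / y)) by field; rewrite !gt_eqF.
nra.
Qed.

Section Sums.
Variable n : nat.

Lemma sum_diff1 (f g : 'I_n -> R) (i : 'I_n) :
  (forall k, k != i -> f k = g k) -> \sum_k f k - \sum_k g k = f i - g i.
Proof.
move=> H; rewrite (bigD1 i) //= [X in _ - X](bigD1 i) //=.
rewrite (eq_bigr (fun k => g k)) => [|k /H //]; ring.
Qed.

Lemma logsum (x y : 'I_n -> R) : (forall i, 0 <= x i) -> (forall i, 0 < y i) ->
  0 < \sum_i x i -> 0 < \sum_i y i ->
  (\sum_i x i) * ln ((\sum_i x i) / (\sum_i y i)) <= \sum_i hf (x i) (y i).
Proof.
move=> hx hy hs ha.
set s := \sum_i x i; set al := \sum_i y i.
apply: le_trans (ler_sum _ (fun i _ => logsum_term (hx i) (hy i) hs ha)).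
rewrite !big_split /= sumrN -!mulr_suml -/s -/al.
have -> : al * s / al = s by field; rewrite gt_eqF.
lra.
Qed.

Lemma KL_scale (c : R) (x y : 'I_n -> R) : 0 < c -> (forall i, 0 <= x i) -> (forall i, 0 < y i) ->
  KL (fun i => c * x i) y = c * \sum_i hf (x i) (y i) + c * ln c * \sum_i x i - c * \sum_i x i + \sum_i y i.
Proof.
move=> hc hx hy; rewrite /KL.
rewrite (eq_bigr (fun i => c * hf (x i) (y i) + c * ln c * x i - c * x i + y i)); last first.
  by move=> i _; rewrite -(hscale _ (hx i) (hy i)).
by rewrite !big_split /= sumrN !mulr_sumr.
Qed.

End Sums.

Section Primal.
Variables (n : nat) (C : 'M[R]_n) (a b : 'I_n -> R) (tau e : R).
Hypotheses (hC : forall i j, 0 <= C i j) (ha : forall i, 0 < a i) (hb : forall j, 0 < b j)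
  (htau : 0 < tau) (he : 0 <= e).

Definition Qf (X : 'M[R]_n) : R := \sum_i \sum_j X i j ^+ 2.
Definition Fe (X : 'M[R]_n) : R := fobj C a b tau X + e * Qf X.

Lemma sum_colsum (X : 'M[R]_n) : \sum_j colsum X j = \sum_i \sum_j X i j.
Proof. by rewrite /colsum exchange_big. Qed.

Lemma rowsum_ge0 (X : 'M[R]_n) : nonneg_mx X -> forall i, 0 <= rowsum X i.
Proof. by move=> hX i; apply: sumr_ge0 => j _; apply: hX. Qed.
Lemma colsum_ge0 (X : 'M[R]_n) : nonneg_mx X -> forall i, 0 <= colsum X i.
Proof. by move=> hX i; apply: sumr_ge0 => j _; apply: hX. Qed.

Lemma Fe_scale (c : R) (X : 'M[R]_n) : 0 < c -> nonneg_mx X ->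
  Fe (c *: X) = c * (\sum_i \sum_j C i j * X i j)
   + tau * (c * \sum_i hf (rowsum X i) (a i) + c * ln c * (\sum_i \sum_j X i j) - c * (\sum_i \sum_j X i j) + \sum_i a i)
   + tau * (c * \sum_j hf (colsum X j) (b j) + c * ln c * (\sum_i \sum_j X i j) - c * (\sum_i \sum_j X i j) + \sum_j b j)
   + e * (c ^+ 2 * Qf X).
Proof.
move=> hc hX; rewrite /Fe /fobj.
have -> : rowsum (c *: X) = (fun i => c * rowsum X i).
  by apply/funext => i; rewrite /rowsum mulr_sumr; apply: eq_bigr => j _; rewrite mxE.
have -> : colsum (c *: X) = (fun i => c * colsum X i).
  by apply/funext => i; rewrite /colsum mulr_sumr; apply: eq_bigr => j _; rewrite mxE.
rewrite !KL_scale //; try exact: rowsum_ge0; try exact: colsum_ge0.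
rewrite sum_colsum.
have -> : \sum_i \sum_j C i j * (c *: X) i j = c * \sum_i \sum_j C i j * X i j.
  rewrite mulr_sumr; apply: eq_bigr => i _; rewrite mulr_sumr; apply: eq_bigr => j _.
  by rewrite mxE; ring.
have -> : Qf (c *: X) = c ^+ 2 * Qf X.
  rewrite /Qf mulr_sumr; apply: eq_bigr => i _; rewrite mulr_sumr; apply: eq_bigr => j _.
  by rewrite mxE; ring.
done.
Qed.

Lemma sum_pos (i0 : 'I_n) (f : 'I_n -> R) : (forall i, 0 < f i) -> 0 < \sum_i f i.
Proof.
move=> hf; rewrite (bigD1 i0) //=.
have := hf i0; have : 0 <= \sum_(i | i != i0) f i by apply: sumr_ge0 => i _; apply: ltW.
lra.
Qed.

Lemma primal_i (i0 : 'I_n) (X : 'M[R]_n) : is_minimizer Fe X ->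
  norm1_mx X <= (\sum_i a i + \sum_j b j) / 2.
Proof.
move=> [hX opt].
have hal : 0 < \sum_i a i by apply: sum_pos.
have hbe : 0 < \sum_j b j by apply: sum_pos.
have -> : norm1_mx X = \sum_i \sum_j X i j.
  by apply: eq_bigr => i _; apply: eq_bigr => j _; rewrite ger0_norm.
set s := \sum_i \sum_j X i j.
have s0 : 0 <= s by apply: sumr_ge0 => i _; apply: sumr_ge0 => j _.
case: (leP s 0) => hs.
  have -> : s = 0 by apply: le_anti; rewrite hs s0.
  apply: divr_ge0; lra.
set P := \sum_i \sum_j C i j * X i j.
set Lr := \sum_i hf (rowsum X i) (a i).
set Lq := \sum_j hf (colsum X j) (b j).
have P0 : 0 <= P by apply: sumr_ge0 => i _; apply: sumr_ge0 => j _; apply: mulr_ge0.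
have Q0 : 0 <= Qf X by apply: sumr_ge0 => i _; apply: sumr_ge0 => j _; apply: sqr_ge0.
have K0 : P + tau * (Lr + Lq) <= 0.
  apply: (@small_pos _ (2 * tau * s) (1/2)); [lra | by rewrite !mulr_ge0 // ?ltW |].
  move=> d hd hd2.
  set c := 1 - d.
  have hc : 0 < c by rewrite /c; lra.
  have hnn : nonneg_mx (c *: X) by move=> i j; rewrite mxE mulr_ge0 // ltW.
  have H := opt _ hnn.
  have e1 : Fe X = Fe (1 *: X) by rewrite scale1r.
  rewrite e1 !Fe_scale ?scale1r // ?ltr01 // ln1 !mul1r expr1n !mul0r !mul1r in H.
  rewrite -/P -/Lr -/Lq -/s in H.
  have hl : ln c <= c - 1 by apply: ln_le_sub1.
  have hts : 0 < tau * s by rewrite mulr_gt0.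
  have h1 : tau * s * (c * ln c) <= tau * s * (c * (c - 1)) by rewrite ler_pM2l // ler_pM2l.
  have h2 : e * (c ^+ 2 - 1) * Qf X <= 0.
    rewrite -mulrA mulr_ge0_le0 // mulr_le0_ge0 //; rewrite /c; nra.
  have H3 : d * (P + tau * (Lr + Lq)) <= d * (2 * tau * s * d).
    rewrite /c in H h1 h2; nra.
  by rewrite ler_pM2l in H3.
have : s * (ln (s / \sum_i a i) + ln (s / \sum_j b j)) <= 0.
  have l1 : s * ln (s / \sum_i a i) <= Lr.
    have := @logsum _ (rowsum X) a (rowsum_ge0 hX) ha.
    by rewrite -/s; apply.
  have l2 : s * ln (s / \sum_j b j) <= Lq.
    have := @logsum _ (colsum X) b (colsum_ge0 hX) hb.
    by rewrite sum_colsum -/s; apply.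
  have : tau * (Lr + Lq) <= 0 by lra.
  rewrite pmulr_rle0 // => h; lra.
rewrite pmulr_rle0 // => h.
by apply: final_s.
Qed.


Definition pert (X : 'M[R]_n) (i j : 'I_n) (t : R) : 'M[R]_n :=
  \matrix_(k, l) (if k == i then (if l == j then X k l + t else X k l) else X k l).

Lemma sum_pert1 (f : 'I_n -> R) (j : 'I_n) (t : R) :
  \sum_l (if l == j then f l + t else f l) = \sum_l f l + t.
Proof.
have := @sum_diff1 _ (fun l => if l == j then f l + t else f l) f j.
rewrite eqxx => H.
have H2 := H (fun k hk => ifN _ _ hk).
lra.
Qed.

Lemma rowsum_pert (X : 'M[R]_n) i j t k :
  rowsum (pert X i j t) k = if k == i then rowsum X k + t else rowsum X k.
Proof.
rewrite /rowsum; case: eqP => [->|/eqP ne].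
  rewrite -(sum_pert1 _ j); apply: eq_bigr => l _; by rewrite mxE eqxx.
by apply: eq_bigr => l _; rewrite mxE (negbTE ne).
Qed.

Lemma colsum_pert (X : 'M[R]_n) i j t l :
  colsum (pert X i j t) l = if l == j then colsum X l + t else colsum X l.
Proof.
rewrite /colsum; case: eqP => [->|/eqP ne].
  rewrite -(sum_pert1 _ i); apply: eq_bigr => k _; by rewrite mxE eqxx.
apply: eq_bigr => k _; rewrite mxE (negbTE ne); by case: ifP.
Qed.

Lemma KL_pert (x y : 'I_n -> R) (i : 'I_n) (t : R) :
  KL (fun k => if k == i then x k + t else x k) y - KL x y =
  (hf (x i + t) (y i) - (x i + t) + y i) - (hf (x i) (y i) - x i + y i).
Proof.
rewrite /KL (@sum_diff1 _ _ _ i) ?eqxx // => k hk; by rewrite (negbTE hk).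
Qed.

Lemma Fe_pert (X : 'M[R]_n) i j t :
  Fe (pert X i j t) - Fe X =
   C i j * t
   + tau * ((hf (rowsum X i + t) (a i) - (rowsum X i + t) + a i) - (hf (rowsum X i) (a i) - rowsum X i + a i))
   + tau * ((hf (colsum X j + t) (b j) - (colsum X j + t) + b j) - (hf (colsum X j) (b j) - colsum X j + b j))
   + e * ((X i j + t) ^+ 2 - X i j ^+ 2).
Proof.
have hr : rowsum (pert X i j t) = (fun k => if k == i then rowsum X k + t else rowsum X k).
  by apply/funext => k; rewrite rowsum_pert.
have hc : colsum (pert X i j t) = (fun k => if k == j then colsum X k + t else colsum X k).
  by apply/funext => k; rewrite colsum_pert.
have l1 : \sum_k \sum_l C k l * pert X i j t k l - \sum_k \sum_l C k l * X k l = C i j * t.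
  rewrite (@sum_diff1 _ _ _ i); last first.
    by move=> k hk; apply: eq_bigr => l _; rewrite mxE (negbTE hk).
  rewrite (@sum_diff1 _ _ _ j); last first.
    by move=> l hl; rewrite mxE eqxx (negbTE hl).
  rewrite mxE !eqxx; ring.
have l2 : Qf (pert X i j t) - Qf X = (X i j + t) ^+ 2 - X i j ^+ 2.
  rewrite /Qf (@sum_diff1 _ _ _ i); last first.
    by move=> k hk; apply: eq_bigr => l _; rewrite mxE (negbTE hk).
  rewrite (@sum_diff1 _ _ _ j); last first.
    by move=> l hl; rewrite mxE eqxx (negbTE hl).
  by rewrite mxE !eqxx.
have l3 := KL_pert (rowsum X) a i t.
have l4 := KL_pert (colsum X) b j t.
rewrite /Fe /fobj hr hc.
move: l1 l2 l3 l4.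
set A1 := \sum_k \sum_l _.
set A2 := \sum_k \sum_l _.
set K1 := KL _ a. set K2 := KL _ a. set K3 := KL _ b. set K4 := KL _ b.
set Q1 := Qf _. set Q2 := Qf X.
move=> l1 l2 l3 l4.
have -> : A1 = A2 + C i j * t by rewrite -l1; ring.
have -> : Q1 = Q2 + ((X i j + t) ^+ 2 - X i j ^+ 2) by rewrite -l2; ring.
have -> : K1 = K2 + ((hf (rowsum X i + t) (a i) - (rowsum X i + t) + a i) - (hf (rowsum X i) (a i) - rowsum X i + a i)) by rewrite -l3; ring.
have -> : K3 = K4 + ((hf (colsum X j + t) (b j) - (colsum X j + t) + b j) - (hf (colsum X j) (b j) - colsum X j + b j)) by rewrite -l4; ring.
ring.
Qed.


Lemma primal_iv (X : 'M[R]_n) (i j : 'I_n) : is_minimizer Fe X ->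
  a i * b j * expR (- (C i j + 2 * e * X i j) / tau) <= rowsum X i * colsum X j.
Proof.
move=> [hX opt].
set r := rowsum X i; set q := colsum X j.
have r0 : 0 <= r by apply: rowsum_ge0.
have q0 : 0 <= q by apply: colsum_ge0.
set E0 := expR (- (C i j + 2 * e * X i j) / tau).
have E0p : 0 < E0 by apply: expR_gt0.
set M := a i * b j * E0.
have Mp : 0 < M by rewrite !mulr_gt0.
have hai := ha i; have hbj := hb j.
suff : M - r * q <= 0 by lra.
have hMe : 0 <= M * e / tau by rewrite divr_ge0 ?mulr_ge0 // ltW.
apply: (@small_pos _ (r + q + 1 + M * e / tau) 1) => //; first by lra.
move=> t ht ht1.
have hY : nonneg_mx (pert X i j t).
  move=> k l; rewrite mxE; have := hX k l; case: (k == i); case: (l == j); lra.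
have H := opt _ hY.
have H1 : 0 <= Fe (pert X i j t) - Fe X by lra.
rewrite Fe_pert -/r -/q in H1.
have c1 := hconv r0 ht hai.
have c2 := hconv q0 ht hbj.
have hrt : 0 < r + t by lra.
have hqt : 0 < q + t by lra.
set Z := C i j + tau * (ln ((r + t) / a i) + ln ((q + t) / b j)) + e * (2 * X i j + t).
have HZ : 0 <= t * Z.
  apply: le_trans H1 _.
  have h1 : tau * (hf (r + t) (a i) - hf r (a i)) <= tau * (t * (ln ((r + t) / a i) + 1)) by rewrite ler_pM2l.
  have h2 : tau * (hf (q + t) (b j) - hf q (b j)) <= tau * (t * (ln ((q + t) / b j) + 1)) by rewrite ler_pM2l.
  rewrite /Z; nra.
rewrite pmulr_rge0 // in HZ.
set W := (r + t) / a i * ((q + t) / b j).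
have Wp : 0 < W by rewrite mulr_gt0 // divr_gt0.
have HW : - (C i j + e * (2 * X i j + t)) / tau <= ln W.
  rewrite lnM ?posrE ?divr_gt0 // ler_pdivrMr // -subr_ge0.
  by rewrite /Z in HZ; nra.
have HW2 := exp_le_of Wp HW.
have eq1 : - (C i j + e * (2 * X i j + t)) / tau = - (C i j + 2 * e * X i j) / tau + - (e * t / tau).
  by field; rewrite gt_eqF.
rewrite eq1 expRD -/E0 in HW2.
have HE := @expR_ge1Dx R (- (e * t / tau)).
have HE2 : E0 * (1 + - (e * t / tau)) <= W by apply: le_trans HW2; rewrite ler_pM2l.
have eq2 : W = (r + t) * (q + t) / (a i * b j) by rewrite /W mulf_div.
rewrite eq2 ler_pdivlMr ?mulr_gt0 // in HE2.
have : M - M * (e * t / tau) <= (r + t) * (q + t).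
  have -> : M - M * (e * t / tau) = E0 * (1 + - (e * t / tau)) * (a i * b j) by rewrite /M; ring.
  exact: HE2.
have -> : M * (e * t / tau) = M * e / tau * t by ring.
nra.
Qed.
End Primal.

Section Dual.
Variables (n : nat) (C : 'M[R]_n) (a b : 'I_n -> R) (tau eta : R).
Hypotheses (hC : forall i j, 0 <= C i j) (ha : forall i, 0 < a i) (hb : forall j, 0 < b j)
  (htau : 0 < tau) (heta : 0 < eta).

Definition pm (u v : 'I_n -> R) : 'M[R]_n := \matrix_(i, j) Num.max 0 (u i + v j - C i j).
Definition Phi (u v : 'I_n -> R) : R := dual_obj a b tau eta u v (pm u v).

Lemma pm_feas u v : dual_feasible C u v (pm u v).
Proof. by move=> i j; rewrite mxE le_max lexx le_max lexx orbT. Qed.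

Lemma dual_phi u v t : dual_optimal C a b tau eta u v t -> forall u' v', Phi u' v' <= Phi u v.
Proof.
move=> [hf opt] u' v'.
apply: le_trans (opt _ _ _ (pm_feas u' v')) _.
rewrite /Phi /dual_obj.
have H : \sum_i \sum_j pm u v i j ^+ 2 <= \sum_i \sum_j t i j ^+ 2.
  apply: ler_sum => i _; apply: ler_sum => j _.
  have [h0 h1] := hf i j.
  have p0 : 0 <= pm u v i j by rewrite mxE le_max lexx.
  have p1 : pm u v i j <= t i j by rewrite mxE ge_max h0 h1.
  nra.
have hi : 0 < (4 * eta)^-1 by rewrite invr_gt0 mulr_gt0.
have := ler_wpM2l (ltW hi) H; lra.
Qed.

Lemma sum_sq_bound (w : 'I_n -> R) (d : R) :
  \sum_l (w l ^+ 2 + 2 * d * w l + d ^+ 2) = \sum_l w l ^+ 2 + 2 * d * \sum_l w l + n%:R * d ^+ 2.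
Proof.
rewrite !big_split /= -mulr_sumr sumr_const card_ord; congr (_ + _); by rewrite mulr_natl.
Qed.

Lemma foc_ineq u v t (i : 'I_n) (d : R) : dual_optimal C a b tau eta u v t -> -(tau / 2) <= d ->
  d * (a i * expR (- u i / tau)) - (2 * (4 * eta)^-1) * d * (\sum_l pm u v i l)
  <= d ^+ 2 * (n%:R * (4 * eta)^-1 + 2 * (a i * expR (- u i / tau)) / tau).
Proof.
move=> opt hd.
set E := a i * expR (- u i / tau).
set T := \sum_l pm u v i l.
set u' := fun k => if k == i then u k + d else u k.
have H := dual_phi opt u' v.
rewrite /Phi /dual_obj in H.
have d1 : \sum_k \sum_l pm u' v k l ^+ 2 - \sum_k \sum_l pm u v k l ^+ 2
          = \sum_l pm u' v i l ^+ 2 - \sum_l pm u v i l ^+ 2.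
  apply: sum_diff1 => k hk; apply: eq_bigr => l _; by rewrite !mxE /u' (negbTE hk).
have d2 : \sum_k expR (- u' k / tau) * a k - \sum_k expR (- u k / tau) * a k
          = expR (- (u i + d) / tau) * a i - expR (- u i / tau) * a i.
  rewrite (@sum_diff1 _ _ _ i) => [|k hk]; first by rewrite /u' eqxx.
  by rewrite /u' (negbTE hk).
have b1 : \sum_l pm u' v i l ^+ 2 <= \sum_l (pm u v i l ^+ 2 + 2 * d * pm u v i l + d ^+ 2).
  apply: ler_sum => l _; rewrite !mxE /u' eqxx.
  have := pmax_sq (u i + v l - C i l) d.
  by rewrite (_ : u i + d + v l - C i l = u i + v l - C i l + d) //; ring.
rewrite sum_sq_bound -/T in b1.
have ht2 : -(1/2) <= d / tau.
  rewrite -(@ler_pM2r _ tau) // mulfVK ?gt_eqF //; lra.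
have b2 := expN_bound ht2.
have b3 : expR (- (u i + d) / tau) * a i <= E * (1 - d / tau + 2 * (d / tau) ^+ 2).
  rewrite /E (_ : - (u i + d) / tau = - u i / tau + - (d / tau)); last by field; rewrite gt_eqF.
  rewrite expRD mulrAC [expR _ * a i]mulrC ler_pM2l ?mulr_gt0 ?expR_gt0 //.
have hi : 0 < (4 * eta)^-1 by rewrite invr_gt0 mulr_gt0.
set N := n%:R.
set ie := (4 * eta)^-1 in hi H *.
set A' := \sum_k \sum_l pm u' v k l ^+ 2 in H d1.
set A := \sum_k \sum_l pm u v k l ^+ 2 in H d1.
set B' := \sum_k expR (- u' k / tau) * a k in H d2.
set B := \sum_k expR (- u k / tau) * a k in H d2.
have hA : ie * (A' - A) <= ie * (\sum_l pm u v i l ^+ 2 + 2 * d * T + N * d ^+ 2 - \sum_l pm u v i l ^+ 2).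
  apply: ler_wpM2l; [exact: ltW | rewrite d1; lra].
have hB : tau * (B' - B) <= tau * (E * (1 - d / tau + 2 * (d / tau) ^+ 2) - E).
  apply: ler_wpM2l; [exact: ltW | rewrite d2 [expR (- u i / tau) * a i]mulrC -/E; lra].
have e1 : tau * (E * (1 - d / tau + 2 * (d / tau) ^+ 2) - E) = - d * E + d ^+ 2 * (2 * E / tau).
  by field; rewrite gt_eqF.
rewrite e1 in hB.
lra.
Qed.

Lemma foc_u u v t (i : 'I_n) : dual_optimal C a b tau eta u v t ->
  a i * expR (- u i / tau) = (2 * (4 * eta)^-1) * \sum_l pm u v i l.
Proof.
move=> opt.
have hE : 0 < a i * expR (- u i / tau) by rewrite mulr_gt0 ?expR_gt0.
have hi : 0 < (4 * eta)^-1 by rewrite invr_gt0 mulr_gt0.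
set K := n%:R * (4 * eta)^-1 + 2 * (a i * expR (- u i / tau)) / tau.
have hK : 0 <= K.
  have k1 : 0 <= n%:R * (4 * eta)^-1 by rewrite mulr_ge0 // ltW.
  have k2 : 0 <= 2 * (a i * expR (- u i / tau)) / tau by rewrite divr_ge0 ?mulr_ge0 // ltW.
  rewrite /K; lra.
have ht2 : 0 < tau / 2 by rewrite divr_gt0.
set G := a i * expR (- u i / tau) - 2 * (4 * eta)^-1 * \sum_l pm u v i l.
have g1 : G <= 0.
  apply: (small_pos (K := K) (d0 := tau / 2)) => // d hd hd2.
  have := @foc_ineq u v t i d opt (_ : -(tau/2) <= d); rewrite -/K => /(_ ltac:(lra)) h.
  have h2 : d * G <= d * (K * d) by rewrite /G; nra.
  by move: h2; rewrite ler_pM2l.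
have g2 : - G <= 0.
  apply: (small_pos (K := K) (d0 := tau / 2)) => // d hd hd2.
  have := @foc_ineq u v t i (- d) opt (_ : -(tau/2) <= - d); rewrite -/K => /(_ ltac:(lra)) h.
  have h2 : d * (- G) <= d * (K * d) by rewrite /G; nra.
  by move: h2; rewrite ler_pM2l.
rewrite /G in g1 g2; lra.
Qed.
End Dual.

Lemma dual_tr n (C : 'M[R]_n) a b tau eta u v t :
  dual_optimal C a b tau eta u v t -> dual_optimal C^T b a tau eta v u t^T.
Proof.
have objT : forall (a0 b0 u0 v0 : 'I_n -> R) (t0 : 'M[R]_n),
    dual_obj b0 a0 tau eta v0 u0 t0^T = dual_obj a0 b0 tau eta u0 v0 t0.
  move=> a0 b0 u0 v0 t0; rewrite /dual_obj.
  have -> : \sum_i \sum_j t0^T i j ^+ 2 = \sum_i \sum_j t0 i j ^+ 2.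
    by rewrite exchange_big; apply: eq_bigr => i _; apply: eq_bigr => j _; rewrite mxE.
  ring.
move=> [hf opt]; split.
  move=> i j; have [h1 h2] := hf j i; rewrite !mxE; split => //; lra.
move=> u' v' t' hf'.
have hf2 : dual_feasible C v' u' t'^T.
  by move=> i j; have [h1 h2] := hf' j i; rewrite !mxE in h1 h2 *; split => //; lra.
have := opt _ _ _ hf2.
by rewrite -[t']trmxK (objT a b v' u' t'^T) (objT a b u v t) trmxK.
Qed.

Lemma vmin_gt0 n (i0 : 'I_n) (x : 'I_n -> R) : (forall i, 0 < x i) -> 0 < vmin i0 x.
Proof.
move=> hx; rewrite /vmin; elim/big_ind: _ => //.
by move=> p q hp hq; rewrite lt_min hp hq.
Qed.

Lemma vmin_le n (i0 : 'I_n) (x : 'I_n -> R) i : vmin i0 x <= x i.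
Proof. exact: bigmin_le. Qed.

Definition pp n (C : 'M[R]_n) (u v : 'I_n -> R) i j := Num.max 0 (u i + v j - C i j).

Lemma dual_S n (i0 : 'I_n) (C : 'M[R]_n) a b tau eta u v t :
  (forall i j, 0 <= C i j) -> (forall i, 0 < a i) -> (forall j, 0 < b j) ->
  0 < tau -> 0 < eta -> dual_optimal C a b tau eta u v t ->
  (forall i, a i * expR (- u i / tau) = 2 / (4 * eta) * \sum_j pp C u v i j) /\
  (forall j, b j * expR (- v j / tau) = 2 / (4 * eta) * \sum_i pp C u v i j) /\
  2 / (4 * eta) * \sum_i \sum_j pp C u v i j <= (\sum_i a i + \sum_j b j) / 2.
Proof.
move=> hC ha hb htau heta opt.
set c := 2 / (4 * eta).
have hc : 0 < c by rewrite /c divr_gt0 // mulr_gt0.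
have fu : forall i, a i * expR (- u i / tau) = c * \sum_j pp C u v i j.
  move=> i; rewrite (foc_u ha htau heta i opt); congr (_ * _).
  by apply: eq_bigr => l _; rewrite mxE.
have fv : forall j, b j * expR (- v j / tau) = c * \sum_i pp C u v i j.
  move=> j; rewrite (foc_u hb htau heta j (dual_tr opt)); congr (_ * _).
  by apply: eq_bigr => l _; rewrite !mxE /pp (addrC (v j)).
split => //; split => //.
set S := c * \sum_i \sum_j pp C u v i j.
have sE : \sum_i a i * expR (- u i / tau) = S.
  by rewrite /S mulr_sumr; apply: eq_bigr => i _; rewrite fu.
have sF : \sum_j b j * expR (- v j / tau) = S.
  by rewrite /S exchange_big mulr_sumr; apply: eq_bigr => j _; rewrite fv.
have pos : 0 <= \sum_i a i * expR (- u i / tau) * u i + \sum_j b j * expR (- v j / tau) * v j.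
  have -> : \sum_i a i * expR (- u i / tau) * u i = c * \sum_i \sum_j pp C u v i j * u i.
    rewrite mulr_sumr; apply: eq_bigr => i _; rewrite fu -mulrA mulr_suml //.
  have -> : \sum_j b j * expR (- v j / tau) * v j = c * \sum_i \sum_j pp C u v i j * v j.
    rewrite exchange_big mulr_sumr; apply: eq_bigr => j _; rewrite fv -mulrA mulr_suml //.
  rewrite -mulrDr -big_split /=; apply: mulr_ge0; first exact: ltW.
  apply: sumr_ge0 => i _; rewrite -big_split /=; apply: sumr_ge0 => j _.
  rewrite -mulrDr /pp.
  have := hC i j; case: (leP 0 (u i + v j - C i j)) => h h'; rewrite ?max_r ?max_l //; [nra | lra].
have Ep : forall i, 0 < a i * expR (- u i / tau) by move=> i; rewrite mulr_gt0 ?expR_gt0.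
have Fp : forall j, 0 < b j * expR (- v j / tau) by move=> j; rewrite mulr_gt0 ?expR_gt0.
have Sp : 0 < S by rewrite -sE; apply: sum_pos.
have hal : 0 < \sum_i a i by apply: sum_pos.
have hbe : 0 < \sum_j b j by apply: sum_pos.
have l1 := logsum (fun i => ltW (Ep i)) ha (sum_pos i0 Ep) hal.
have l2 := logsum (fun i => ltW (Fp i)) hb (sum_pos i0 Fp) hbe.
rewrite sE in l1; rewrite sF in l2.
have hE : forall (x y z : R), 0 < y -> hf (y * expR (- z / tau)) y = y * expR (- z / tau) * (- z / tau).
  move=> x y z hy; rewrite /hf mulf_eq0 expR_eq0 orbF (gt_eqF hy) /=.
  by rewrite [y * _ / y]mulrAC divff ?gt_eqF // mul1r expRK.
rewrite (eq_bigr _ (fun i _ => hE 0 _ (u i) (ha i))) in l1.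
rewrite (eq_bigr _ (fun i _ => hE 0 _ (v i) (hb i))) in l2.
have e1 : \sum_i a i * expR (- u i / tau) * (- u i / tau) = - (\sum_i a i * expR (- u i / tau) * u i) / tau.
  rewrite mulNr mulr_suml -sumrN; apply: eq_bigr => i _; rewrite /=; ring.
have e2 : \sum_i b i * expR (- v i / tau) * (- v i / tau) = - (\sum_j b j * expR (- v j / tau) * v j) / tau.
  rewrite mulNr mulr_suml -sumrN; apply: eq_bigr => i _; rewrite /=; ring.
rewrite e1 in l1; rewrite e2 in l2.
set A := \sum_i a i * expR (- u i / tau) * u i in pos l1.
set B := \sum_j b j * expR (- v j / tau) * v j in pos l2.
have e3 : - A / tau + - B / tau = - ((A + B) / tau) by field; rewrite gt_eqF.
have h4 : 0 <= (A + B) / tau by rewrite divr_ge0 // ltW.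
have h5 : S * (ln (S / \sum_i a i) + ln (S / \sum_j b j)) <= 0 by lra.
rewrite pmulr_rle0 // in h5.
exact: final_s.
Qed.
Lemma ii_lemma (ai u tau H : R) : 0 < ai -> 0 < tau -> 0 < H ->
  ai * expR (- u / tau) <= H -> tau * ln (ai / H) <= u.
Proof.
move=> ha ht hH h.
have z0 : 0 < expR (u / tau) := expR_gt0 _.
rewrite mulNr expRN in h.
have h2 : ai <= H * expR (u / tau) by rewrite -ler_pdivrMr // mulrC.
have h3 : ai / H <= expR (u / tau) by rewrite ler_pdivrMr // mulrC.
have h4 := ln_le_of (divr_gt0 ha hH) h3.
have := ler_wpM2l (ltW ht) h4.
have e : tau * (u / tau) = u by field; rewrite gt_eqF.
by rewrite e.
Qed.

Lemma iii_lemma (u v c p N e AB tau m ai bj : R) :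
  0 < tau -> 0 < ai -> 0 < bj -> 0 < AB -> 0 <= N -> 0 <= p ->
  tau * ln (ai / (AB / 2)) <= u -> tau * ln (bj / (AB / 2)) <= v ->
  u <= c + p - v -> c <= N -> p <= e * AB -> m <= ln ai -> m <= ln bj ->
  `|u| <= N + e * AB + tau * ln (AB / 2) - tau * m.
Proof.
move=> ht ha hb hAB hN hp hu hv huv hc hpe hma hmb.
have hH : 0 < AB / 2 by rewrite divr_gt0.
rewrite ln_div ?posrE // mulrBr in hu.
rewrite ln_div ?posrE // mulrBr in hv.
have t1 := ler_wpM2l (ltW ht) hma.
have t2 := ler_wpM2l (ltW ht) hmb.
rewrite ler_norml; apply/andP; split; lra.
Qed.

Lemma iv_lemma (r q ai bj X c N eta tau AB m mn : R) :
  0 < tau -> 0 < eta -> 0 < m -> m <= ai -> m <= bj -> 0 <= X -> X <= AB / 2 -> c <= N ->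
  0 <= r -> r <= AB / 2 -> 0 <= q -> q <= AB / 2 -> 0 < AB -> mn <= ln m ->
  ai * bj * expR (- (c + 2 * eta * X) / tau) <= r * q ->
  m * expR (- (N + eta * AB + tau * ln (AB / 2) - tau * mn) / tau) <= Num.min r q.
Proof.
move=> ht he hm hma hmb hX0 hX hc hr0 hr hq0 hq hAB hmn hrq.
set H := AB / 2.
have hH : 0 < H by rewrite divr_gt0.
set E1 := expR (- (N + eta * AB) / tau).
have E1p : 0 < E1 := expR_gt0 _.
have eD : - (N + eta * AB + tau * ln H - tau * mn) / tau = - (N + eta * AB) / tau + (- ln H + mn).
  by field; rewrite gt_eqF.
rewrite eD expRD expRD expRN (lnK hH) -/E1.
have hmn2 : expR mn <= m by apply: exp_le_of.
have hE0 : E1 <= expR (- (c + 2 * eta * X) / tau).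
  rewrite ler_expR ler_pdivrMr // divfK ?gt_eqF //.
  have : 2 * eta * X <= eta * AB.
    have : 2 * X <= AB by rewrite /H in hX; lra.
    nra.
  lra.
set K := m * m * E1.
have Kp : 0 < K by rewrite !mulr_gt0.
have hK : K <= r * q.
  apply: le_trans hrq.
  have : m * m <= ai * bj by nra.
  have e0p : 0 < expR (- (c + 2 * eta * X) / tau) := expR_gt0 _.
  rewrite /K; nra.
have hr2 : K <= r * H by apply: le_trans hK _; apply: ler_wpM2l.
have hq2 : K <= q * H by apply: le_trans hK _; rewrite mulrC; apply: ler_wpM2l.
have hr3 : K / H <= r by rewrite ler_pdivrMr.
have hq3 : K / H <= q by rewrite ler_pdivrMr.
apply: (@le_trans _ _ (K / H)); last by rewrite le_min hr3 hq3.
rewrite /K.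
have hinv : 0 < H^-1 by rewrite invr_gt0.
have : m * (E1 * (H^-1 * expR mn)) <= m * (E1 * (H^-1 * m)).
  by rewrite ler_pM2l // ler_pM2l // ler_pM2l.
move=> h; apply: (le_trans h).
by rewrite (_ : m * m * E1 / H = m * (E1 * (H^-1 * m))) //; ring.
Qed.
Lemma le_sum1 n (f : 'I_n -> R) i : (forall k, 0 <= f k) -> f i <= \sum_k f k.
Proof.
move=> hf; rewrite (bigD1 i) //=.
have : 0 <= \sum_(k | k != i) f k by apply: sumr_ge0.
lra.
Qed.

End S.

Unset Implicit Arguments.
Theorem mainTheorem7 (R : realType) (n : nat) (hn : (0 < n)%N)
  (C : 'M[R]_n) (a b : 'I_n -> R) (tau eta : R)
  (Xeta Xf : 'M[R]_n) (us vs : 'I_n -> R) (ts : 'M[R]_n) :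
  (forall i j, 0 <= C i j) ->
  (forall i, 0 < a i) -> (forall j, 0 < b j) ->
  0 < tau -> 0 < eta ->
  is_minimizer (gobj C a b tau eta) Xeta ->
  is_minimizer (fobj C a b tau) Xf ->
  dual_optimal C a b tau eta us vs ts ->
  let alpha := \sum_i a i in
  let beta := \sum_j b j in
  let amin := vmin (Ordinal hn) a in
  let bmin := vmin (Ordinal hn) b in
  let D := normInf_mx C + eta * (alpha + beta) + tau * ln ((alpha + beta) / 2)
           - tau * Num.min (ln amin) (ln bmin) in
  (* (i) *)
  (norm1_mx Xeta <= (alpha + beta) / 2 /\ norm1_mx Xf <= (alpha + beta) / 2) /\
  (* (ii) *)
  (forall i, tau * ln (2 * a i / (alpha + beta)) <= us i) /\
  (forall j, tau * ln (2 * b j / (alpha + beta)) <= vs j) /\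
  (* (iii) *)
  (normInf_v us <= D /\ normInf_v vs <= D) /\
  (* (iv) *)
  (forall i j, Num.min amin bmin * expR (- D / tau)
                 <= Num.min (rowsum Xeta i) (colsum Xeta j)).
Proof.

Proof.
move=> hC ha hb htau heta hXeta hXf hdual alpha beta amin bmin D.
pose i0 := Ordinal hn.
have hXeta' : is_minimizer (Fe C a b tau eta) Xeta := hXeta.
have hXf' : is_minimizer (Fe C a b tau 0) Xf.
  case: hXf => h1 h2; split => // Y hY; rewrite /Fe !mul0r !addr0; exact: h2.
have i1 := primal_i hC ha hb htau (ltW heta) i0 hXeta'.
have i2 := primal_i hC ha hb htau (lexx 0) i0 hXf'.
have [fu [fv hS]] := dual_S i0 hC ha hb htau heta hdual.
have hal : 0 < alpha by apply: sum_pos.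
have hbe : 0 < beta by apply: sum_pos.
have hAB : 0 < alpha + beta by lra.
have hH : 0 < (alpha + beta) / 2 by rewrite divr_gt0.
set c := 2 / (4 * eta) in fu fv hS.
have hc : 0 < c by rewrite /c divr_gt0 // mulr_gt0.
have pp0 : forall i j, 0 <= pp C us vs i j by move=> i j; rewrite /pp le_max lexx.
have Eb : forall i, a i * expR (- us i / tau) <= (alpha + beta) / 2.
  move=> i; apply: le_trans hS; rewrite fu ler_pM2l //.
  by apply: (le_sum1 (f := fun k => \sum_j pp C us vs k j)) => k; apply: sumr_ge0.
have Fb : forall j, b j * expR (- vs j / tau) <= (alpha + beta) / 2.
  move=> j; apply: le_trans hS; rewrite fv ler_pM2l // exchange_big /=.
  by apply: (le_sum1 (f := fun k => \sum_i pp C us vs i k)) => k; apply: sumr_ge0.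
have e2 : forall x, 2 * x / (alpha + beta) = x / ((alpha + beta) / 2).
  by move=> x; field; rewrite gt_eqF.
have iiu : forall i, tau * ln (2 * a i / (alpha + beta)) <= us i.
  by move=> i; rewrite e2; apply: ii_lemma.
have iiv : forall j, tau * ln (2 * b j / (alpha + beta)) <= vs j.
  by move=> j; rewrite e2; apply: ii_lemma.
have ppb : forall i j, pp C us vs i j <= eta * (alpha + beta).
  move=> i j.
  have h1 : pp C us vs i j <= \sum_i \sum_j pp C us vs i j.
    apply: le_trans (_ : \sum_j pp C us vs i j <= _).
      by apply: (le_sum1 (f := fun k => pp C us vs i k)).
    by apply: (le_sum1 (f := fun k => \sum_j pp C us vs k j)) => k; apply: sumr_ge0.
  have h2 : \sum_i \sum_j pp C us vs i j = (2 * eta) * (c * \sum_i \sum_j pp C us vs i j).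
    by rewrite /c; field; rewrite gt_eqF.
  have h3 := ler_wpM2l (_ : 0 <= 2 * eta) hS.
  rewrite -h2 in h3.
  have : 2 * eta * ((alpha + beta) / 2) = eta * (alpha + beta) by field.
  move=> h4; rewrite h4 in h3; apply: le_trans h1 (h3 _); lra.
have CN : forall i j, C i j <= normInf_mx C.
  move=> i j; apply: le_trans (ler_norm _) _; rewrite /normInf_mx.
  apply: le_trans (_ : \big[Num.max/0]_j0 `|C i j0| <= _).
    exact: (le_bigmax _ (fun j0 => `|C i j0|)).
  exact: (le_bigmax _ (fun i1 => \big[Num.max/0]_j0 `|C i1 j0|)).
have N0 : 0 <= normInf_mx C by apply: le_trans (CN i0 i0); apply: hC.
have amp : 0 < amin by apply: vmin_gt0.
have bmp : 0 < bmin by apply: vmin_gt0.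
have mla : forall i, Num.min (ln amin) (ln bmin) <= ln (a i).
  move=> i; rewrite ge_min; apply/orP; left.
  by rewrite ler_ln ?posrE // vmin_le.
have mlb : forall j, Num.min (ln amin) (ln bmin) <= ln (b j).
  move=> j; rewrite ge_min; apply/orP; right.
  by rewrite ler_ln ?posrE // vmin_le.
have xle : forall i j, us i + vs j - C i j <= pp C us vs i j.
  by move=> i j; rewrite /pp le_max lexx orbT.
have iiiu : forall i, `|us i| <= D.
  move=> i; apply: (iii_lemma (v := vs i0) (c := C i i0) (p := pp C us vs i i0) (e := eta) (ai := a i) (bj := b i0)) => //.
  - by rewrite -e2; apply: iiu.
  - by rewrite -e2; apply: iiv.
  - by have := xle i i0; lra.
have iiiv : forall j, `|vs j| <= D.
  move=> j; apply: (iii_lemma (v := us i0) (c := C i0 j) (p := pp C us vs i0 j) (e := eta) (ai := b j) (bj := a i0)) => //.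
  - by rewrite -e2; apply: iiv.
  - by rewrite -e2; apply: iiu.
  - by have := xle i0 j; lra.
have D0 : 0 <= D by apply: le_trans (iiiu i0); apply: normr_ge0.
split; first by split.
split; first exact: iiu.
split; first exact: iiv.
split.
  by split; apply: bigmax_le => // k _; by [apply: iiiu | apply: iiiv].
move=> i j.
have [hX _] := hXeta'.
have nX : norm1_mx Xeta = \sum_i \sum_j Xeta i j.
  by apply: eq_bigr => k _; apply: eq_bigr => l _; rewrite ger0_norm.
rewrite nX in i1.
have rle : rowsum Xeta i <= (alpha + beta) / 2.
  apply: le_trans i1; rewrite /rowsum.
  by apply: (le_sum1 (f := fun k => \sum_l Xeta k l)) => k; apply: rowsum_ge0.
have qle : colsum Xeta j <= (alpha + beta) / 2.
  apply: le_trans i1; rewrite -sum_colsum.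
  by apply: (le_sum1 (f := colsum Xeta)) => k; apply: colsum_ge0.
have Xle : Xeta i j <= (alpha + beta) / 2.
  apply: le_trans rle; rewrite /rowsum.
  by apply: (le_sum1 (f := fun l => Xeta i l)).
have hiv := primal_iv ha hb htau (ltW heta) i j hXeta'.
have hm : 0 < Num.min amin bmin by rewrite lt_min amp bmp.
apply: (iv_lemma (ai := a i) (bj := b j) (X := Xeta i j) (c := C i j)) => //.
- by rewrite ge_min vmin_le.
- by rewrite ge_min vmin_le orbT.
- exact: rowsum_ge0.
- exact: colsum_ge0.
- rewrite ge_min; case: (leP amin bmin) => h.
    by apply/orP; left; rewrite ler_ln ?posrE // le_min lexx h.
  by apply/orP; right; rewrite ler_ln ?posrE // le_min lexx (ltW h).
Qed.
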